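(* Let $\xi:\mathbb{R}^{D\times D}\to\mathbb{R}$ be smooth and strictly convex on $S^D_+$, and let $\varphi:\mathcal P^\uparrow_\xi\to\mathbb{R}$ be continuous. Then for every $\chi_0\in\mathcal L_{\le1}(\mathcal K_\xi)$, $\bar\varphi_*(\chi_0)=\varphi^\xi_*(\chi_0)$.
   Context: $S^D_+$: positive semidefinite symmetric $D\times D$ matrices with Frobenius norm $|\cdot|$; $B(0,1)$: closed unit ball of $S^D$; $\nabla\xi$: Frobenius gradient; $\mathcal K_\xi=\nabla\xi(B(0,1)\cap S^D_+)$, $x_0=\nabla\xi(0)$. $\mathcal P^\uparrow_\xi=\{\mathrm{Law}(\nabla\xi(\mathsf q(U)))\}$, $U$ uniform on $[0,1)$, $\mathsf q:[0,1)\to S^D_+$ right-continuous nondecreasing ($\mathsf q(v)-\mathsf q(u)\in S^D_+$ for $u\le v$) with $|\mathsf q|\le1$. $\mathcal L_{\le1}(\mathcal K_\xi)$: Lipschitz $\chi:\mathcal K_\xi\to\mathbb{R}$ with $\max\{|\chi(x_0)|,|\chi|_{\mathrm{Lip}}\}\le1$. $|\nu|_{\mathcal M}=\sup_{\chi\in\mathcal L_{\le1}(\mathcal K_\xi)}\int\chi\,\mathrm d\nu$ for signed Borel measures, $\mathcal M_1(\mathcal K_\xi)$ the completion, $d(\nu,\nu')=|\nu-\nu'|_{\mathcal M}$. $\mathrm{Bar}(\eta)(A)=\int\nu(A)\,\mathrm d\eta(\nu)$ for Borel probability measures $\eta$ on $(\mathcal P^\uparrow_\xi,d)$. Definitions: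 $\bar\varphi(\mu')=\sup_\eta\{\int\varphi\,\mathrm d\eta-d(\mathrm{Bar}(\eta),\mu')\}$ (sup over Borel probability measures on $\mathcal P^\uparrow_\xi$), $\bar\varphi_*(\chi)=\inf_{\mu\in\mathcal M_1(\mathcal K_\xi)}\{\int\chi\,\mathrm d\mu-\bar\varphi(\mu)\}$, $\varphi^\xi_*(\chi)=\inf_{\mu\in\mathcal P^\uparrow_\xi}\{\int\chi\,\mathrm d\mu-\varphi(\mu)\}$. *)

(* Defs.v *)
From HB Require Import structures.
From mathcomp Require Import all_boot all_order all_algebra.
From mathcomp Require Import all_classical all_reals all_analysis.
Unset Implicit Arguments. Unset Strict Implicit. Unset Printing Implicit Defensive.
Import Order.TTheory GRing.Theory Num.Theory.
Import numFieldNormedType.Exports.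
Local Open Scope classical_set_scope.
Local Open Scope ring_scope.

Section Defs.
Context {R : realType} {D : nat}.
Local Notation M := 'M[R]_(D, D).

Definition frob (A : M) : R := Num.sqrt (\sum_i \sum_j (A i j) ^+ 2).

Definition psd (A : M) : Prop :=
  A^T = A /\ forall v : 'cV[R]_D, 0 <= (v^T *m A *m v) 0 0.

Definition loewner_le (A B : M) : Prop := psd (B - A).

Definition iterD (vs : seq M) (f : M -> R) : M -> R :=
  foldr (fun v g => 'D_v g) f vs.

Definition smooth (f : M -> R) : Prop :=
  forall vs : seq M,
    continuous (iterD vs f) /\ forall v x : M, derivable (iterD vs f) x v.

Definition strictly_convex_on_psd (f : M -> R) : Prop :=
  forall A B : M, psd A -> psd B -> A <> B ->
  forall t : R, 0 < t < 1 ->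
    f (t *: A + (1 - t) *: B) < t * f A + (1 - t) * f B.

Definition grad (f : M -> R) (A : M) : M :=
  \matrix_(i, j) ('D_(delta_mx i j) f A).

Definition Kxi (xi : M -> R) : set M :=
  [set grad xi A | A in [set A | psd A /\ frob A <= 1]].
Definition x0 (xi : M -> R) : M := grad xi 0.

(** L_{<=1}(K_xi): max(|chi(x0)|, Lip_K(chi)) <= 1, Lipschitz wrt Frobenius
    norm on K_xi (values of chi outside K_xi are irrelevant). *)
Definition lip1 (xi : M -> R) (chi : M -> R) : Prop :=
  `|chi (x0 xi)| <= 1 /\
  forall x y, Kxi xi x -> Kxi xi y -> `|chi x - chi y| <= frob (x - y).

Definition MT : measurableType _ := @g_sigma_algebraType ('M[R]_(D, D) : pointedType) open.

Definition intK (xi : M -> R) (mu : {measure set MT -> \bar R}) (chi : M -> R) : R :=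
  fine (\int[mu]_(x in (Kxi xi : set MT)) (chi x)%:E).

(** P^up_xi: laws of grad xi (q(U)), U uniform on [0,1), q right-continuous,
    nondecreasing (Loewner), with values in S^D_+ and |q| <= 1. *)
Definition inPup (xi : M -> R) (nu : probability MT R) : Prop :=
  exists q : R -> M,
    (forall u, 0 <= u < 1 -> psd (q u) /\ frob (q u) <= 1) /\
    (forall u v, 0 <= u -> u <= v -> v < 1 -> loewner_le (q u) (q v)) /\
    (forall u, 0 <= u < 1 -> q x @[x --> u^'+] --> q u) /\
    (forall A : set MT, measurable A ->
       nu A = (@lebesgue_measure R)
                ([set u | 0 <= u < 1] `&` (fun u => grad xi (q u)) @^-1` A)).

Definition dist (xi : M -> R) (nu nu' : probability MT R) : \bar R :=
  ereal_sup [set (intK xi nu chi - intK xi nu' chi)%:E | chi in lip1 xi].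

(** Borel sigma-algebra of (P^up_xi, d): generated (on the ambient type of
    probability measures) by the sets whose trace on P^up_xi is d-open in
    P^up_xi.  A probability on it charging P^up_xi with mass 1 is the same as a
    Borel probability on (P^up_xi, d). *)
Definition dopen (xi : M -> R) : set (set (probability MT R)) :=
  [set U : set (probability MT R) | forall nu, U nu -> inPup xi nu ->
     exists2 r : R, 0 < r & forall nu', inPup xi nu' -> (dist xi nu nu' < r%:E)%E -> U nu'].
Definition PT (xi : M -> R) := @g_sigma_algebraType (probability MT R) (dopen xi).

Definition Pup (xi : M -> R) : set (PT xi) := [set nu | inPup xi nu].

Definition borel_prob_Pup (xi : M -> R) (eta : probability (PT xi) R) : Prop :=
  eta (Pup xi) = 1%E.

Definition is_Bar (xi : M -> R) (eta : probability (PT xi) R) (beta : probability MT R) : Prop :=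
  forall A : set MT, measurable A ->
    beta A = (\int[eta]_(nu in Pup xi) ((nu : probability MT R) A))%E.

(** M_1(K_xi): completion of the signed Borel measures on K_xi for |.|_M,
    realised as the closure of the signed measures nu = mu1 - mu2
    (mu1, mu2 finite positive measures, restricted to K_xi) in the dual
    norm sup_{chi in L_{<=1}}; an element is given by its action
    chi |-> int chi d mu on L_{<=1}. *)
Definition inM1 (xi : M -> R) (m : (M -> R) -> R) : Prop :=
  forall e : R, 0 < e ->
    exists mu1 mu2 : {finite_measure set MT -> \bar R},
      forall chi, lip1 xi chi ->
        `|m chi - (intK xi mu1 chi - intK xi mu2 chi)| <= e.

Definition dM (xi : M -> R) (beta : probability MT R) (m : (M -> R) -> R) : \bar R :=
  ereal_sup [set (intK xi beta chi - m chi)%:E | chi in lip1 xi].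

Definition barphi (xi : M -> R) (phi : probability MT R -> R) (m : (M -> R) -> R) : \bar R :=
  ereal_sup [set r : \bar R | exists (eta : probability (PT xi) R)
      (beta : probability MT R),
      [/\ borel_prob_Pup xi eta, is_Bar xi eta beta &
       r = (\int[eta]_(nu in Pup xi) (phi nu)%:E - dM xi beta m)%E]].

Definition barphi_star (xi : M -> R) (phi : probability MT R -> R) (chi : M -> R) : \bar R :=
  ereal_inf [set ((m chi)%:E - barphi xi phi m)%E | m in inM1 xi].

Definition phixi_star (xi : M -> R) (phi : probability MT R -> R) (chi : M -> R) : \bar R :=
  ereal_inf [set (intK xi nu chi - phi nu)%:E | nu in inPup xi].

Definition cont_Pup (xi : M -> R) (phi : probability MT R -> R) : Prop :=
  forall nu, inPup xi nu -> forall e : R, 0 < e ->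
    exists2 delta : R, 0 < delta &
      forall nu', inPup xi nu' -> (dist xi nu nu' < delta%:E)%E ->
        `|phi nu - phi nu'| < e.

End Defs.

(* Main.v *)
Require Import Defs.
From HB Require Import structures.
From mathcomp Require Import all_boot all_order all_algebra.
From mathcomp Require Import all_classical all_reals all_analysis.
From mathcomp Require Import measurable_realfun lra.
Import Order.TTheory GRing.Theory Num.Theory.
Import numFieldNormedType.Exports.
Local Open Scope classical_set_scope.
Local Open Scope ring_scope.

Section A.
Context {R : realType} {D : nat}.
Local Notation M := 'M[R]_(D, D).

Lemma frob_ge0 (A : M) : 0 <= frob A.
Proof. exact: sqrtr_ge0. Qed.

Lemma entry_le_mxnorm (A : M) i j : `|A i j| <= `|A|.
Proof.
rewrite (_ : `|A| = mx_norm A) // mx_normrE.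
exact: (le_bigmax _ (fun k : 'I_D * 'I_D => `|A k.1 k.2|) (i, j)).
Qed.

Lemma entry_le_frob (A : M) i j : `|A i j| <= frob A.
Proof.
rewrite /frob -sqrtr_sqr ler_sqrt; last first.
  by apply: sumr_ge0 => k _; apply: sumr_ge0 => l _; exact: sqr_ge0.
rewrite (bigD1 i) //= (bigD1 j) //= -addrA lerDl.
apply: addr_ge0; first by apply: sumr_ge0 => l _; exact: sqr_ge0.
by apply: sumr_ge0 => k _; apply: sumr_ge0 => l _; exact: sqr_ge0.
Qed.

Lemma mxnorm_le_frob (A : M) : `|A| <= frob A.
Proof.
rewrite (_ : `|A| = mx_norm A) // mx_normrE.
apply: bigmax_le; first exact: frob_ge0.
by move=> [i j] _; exact: entry_le_frob.
Qed.

Lemma frob_le_mxnorm (A : M) : frob A <= D%:R * `|A|.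
Proof.
rewrite /frob -[X in _ <= X]ger0_norm ?mulr_ge0 //.
rewrite -sqrtr_sqr ler_sqrt ?sqr_ge0 //.
apply: (@le_trans _ _ (\sum_(i < D) \sum_(j < D) `|A| ^+ 2)).
  apply: ler_sum => i _; apply: ler_sum => j _.
  rewrite -real_normK ?num_real // lerXn2r ?nnegrE //.
  exact: entry_le_mxnorm.
rewrite !sumr_const card_ord -mulrnA -mulr_natr exprMn mulrC.
by rewrite mul1r -natrX mulr_natr -mulnn.
Qed.

Lemma frob0 : frob (0 : M) = 0.
Proof.
rewrite /frob big1 ?sqrtr0 // => i _; rewrite big1 // => j _.
by rewrite mxE expr0n.
Qed.

Lemma cont_mx (T : topologicalType) (f : T -> M) :
  (forall i j, continuous (fun x => f x i j)) -> continuous f.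
Proof.
move=> fc x; apply/cvg_ballP => e e0.
have H : forall ij : 'I_D * 'I_D,
    \forall y \near x, ball (f x ij.1 ij.2) e (f y ij.1 ij.2).
  by move=> ij; move/cvg_ballP: (fc ij.1 ij.2 x); apply.
have := filter_forall (nbhs_filter x) H; apply: filterS => y Hy.
split => // i j; exact: (Hy (i, j)).

Qed.

Lemma cont_sum (T : topologicalType) (I : finType) (F : I -> T -> R) :
  (forall i, continuous (F i)) -> continuous (fun x => \sum_i F i x).
Proof.
move=> Fc; rewrite /index_enum; elim: (Finite.enum I) => [|a r IH].
  by under eq_fun do rewrite big_nil; exact: cst_continuous.
under eq_fun do rewrite big_cons.
by move=> x; apply: continuousD; [exact: Fc|exact: IH].
Qed.

Lemma frob_cont : continuous (@frob R D).
Proof.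
move=> x; apply: continuous_comp; last exact: sqrt_continuous.
apply: cont_sum => i; apply: cont_sum => j y.
by apply: continuousM; exact: coord_continuous.
Qed.


Lemma closed_pre (f : M -> R) (C : set R) :
  continuous f -> closed C -> closed (f @^-1` C).
Proof. by move=> /continuous_closedP; apply. Qed.

Lemma coord_cont i j : continuous (fun A : M => A i j).
Proof. exact: coord_continuous. Qed.

Lemma quad_cont (v : 'cV[R]_D) :
  continuous (fun A : M => (v^T *m A *m v) 0 0).
Proof.
have -> : (fun A : M => (v^T *m A *m v) 0 0) =
    (fun A => \sum_j (\sum_k v^T 0 k * A k j) * v j 0).
  by apply/funext => A; rewrite !mxE; apply: eq_bigr => j _; rewrite !mxE.
apply: cont_sum => j x; apply: continuousM; last exact: cst_continuous.
apply: cont_sum => k y; apply: continuousM; first exact: cst_continuous.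
exact: coord_cont.
Qed.

Definition Sset : set M := [set A | psd A /\ frob A <= 1].

Lemma Sset_closed : closed Sset.
Proof.
have -> : Sset = (\bigcap_(ij in [set: 'I_D * 'I_D])
    ((fun A : M => A ij.1 ij.2 - A ij.2 ij.1) @^-1` [set 0]))
   `&` (\bigcap_(v in [set: 'cV[R]_D])
    ((fun A : M => (v^T *m A *m v) 0 0) @^-1` [set x | 0 <= x]))
   `&` (frob @^-1` [set x | x <= 1]).
  apply/seteqP; split.
    move=> A [[AT Apos] A1]; split; [split|by []].
      move=> [i j] _ /=; apply/eqP; rewrite subr_eq0; apply/eqP.
      by rewrite -{1}AT mxE.
    by move=> v _; exact: Apos.
  move=> A [[As Apos] A1]; split => //; split; last by move=> v; exact: Apos.
  apply/matrixP => i j; rewrite mxE; have := As (j, i) I => /= /eqP.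
  by rewrite subr_eq0 => /eqP.
apply: closedI; first apply: closedI.
- apply: closed_bigI => -[i j] _; apply: closed_pre; last exact: closed_eq.
  by move=> x; apply: continuousB; exact: coord_cont.
- apply: closed_bigI => v _; apply: closed_pre; last exact: closed_ge.
  exact: quad_cont.
- by apply: closed_pre; [exact: frob_cont|exact: closed_le].
Qed.

Lemma vec_mx_entry (v : 'rV[R]_(D * D)) i j :
  vec_mx v i j = v 0 (mxvec_index i j).
Proof. by rewrite -[in RHS](vec_mxK v) mxvecE. Qed.

Lemma vec_mx_cont : continuous (@vec_mx R D D).
Proof.
apply: cont_mx => i j; under eq_fun do rewrite vec_mx_entry.
exact: coord_continuous.
Qed.

Lemma Sset_compact : compact Sset.
Proof.
pose B := [set v : 'rV[R]_(D * D) | forall k, `[-1, 1]%classic (v ord0 k)].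
have Bc : compact B.
  have := @rV_compact R (D * D) (fun=> `[-1, 1]%classic); apply => _.
  exact: segment_compact.
have Ic : compact (vec_mx @` B).
  by apply: continuous_compact => //; apply: continuous_subspaceT; exact: vec_mx_cont.
apply: subclosed_compact Sset_closed Ic _ => A [Ap A1].
exists (mxvec A); last exact: mxvecK.
move=> k; case/mxvec_indexP: k => i j; rewrite /= mxvecE.
rewrite in_itv /= -ler_norml; apply: le_trans A1; exact: entry_le_frob.
Qed.


Lemma grad_cont (xi : M -> R) : smooth xi -> continuous (grad xi).
Proof.
move=> sxi; apply: cont_mx => i j; rewrite /smooth in sxi.
have -> : (fun A => grad xi A i j) = Defs.iterD [:: delta_mx i j] xi.
  by apply/funext => A; rewrite /grad mxE.
by case: (sxi [:: delta_mx i j]).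
Qed.

Lemma Kxi_compact (xi : M -> R) : smooth xi -> compact (Kxi xi).
Proof.
move=> sxi; apply: continuous_compact; last exact: Sset_compact.
by apply: continuous_subspaceT; exact: grad_cont.
Qed.

Lemma Kxi_closed (xi : M -> R) : smooth xi -> closed (Kxi xi).
Proof. by move=> sxi; apply: compact_closed; [exact: norm_hausdorff|exact: Kxi_compact]. Qed.

Lemma open_mT (U : set M) : open U -> measurable (U : set (@MT R D)).
Proof. by move=> oU; apply: sub_gen_smallest. Qed.

Lemma closed_mT (U : set M) : closed U -> measurable (U : set (@MT R D)).
Proof.
move=> cU; rewrite -(setCK U); apply: measurableC.
by apply: open_mT; exact: closed_openC.
Qed.

Lemma Kxi_measurable (xi : M -> R) : smooth xi ->
  measurable (Kxi xi : set (@MT R D)).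
Proof. by move=> sxi; apply: closed_mT; exact: Kxi_closed. Qed.

Lemma psd0 : psd (0 : M).
Proof.
split; first by rewrite trmx0.
by move=> v; rewrite mulmx0 mul0mx mxE.
Qed.

Lemma x0_in_K (xi : M -> R) : Kxi xi (x0 xi).
Proof. by exists 0 => //; split; [exact: psd0|rewrite frob0]. Qed.

Lemma Kxi_bounded (xi : M -> R) : smooth xi ->
  exists C : R, 0 <= C /\ forall x, Kxi xi x -> frob (x - x0 xi) <= C.
Proof.
move=> sxi.
have /compact_bounded [N [_ HN]] := Kxi_compact xi sxi.
have [c [c0 Hc]] : exists c : R, 0 <= c /\ forall x, Kxi xi x -> `|x| <= c.
  exists (`|N| + 1); split; first by rewrite addr_ge0.
  move=> x Kx; apply: (HN (`|N| + 1)) => //.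
  by rewrite (le_lt_trans (real_ler_norm _)) ?ltrDl ?num_real.
exists (D%:R * (c + c)); split; first by rewrite mulr_ge0 ?addr_ge0.
move=> x Kx; apply: le_trans (frob_le_mxnorm _) _.
rewrite ler_wpM2l //; apply: le_trans (ler_normB _ _) _.
by rewrite lerD // Hc //; exact: x0_in_K.
Qed.

End A.

Section B.
Context {R : realType} {D : nat}.
Local Notation M := 'M[R]_(D, D).
Local Notation MT := (@MT R D).

Definition contK (K : set M) (f : M -> R) := forall x, K x -> forall e : R, 0 < e ->
  exists2 d : R, 0 < d & forall z, K z -> ball x d z -> `|f x - f z| < e.

Lemma ballRE (x y e : R) : ball x e y = (`|x - y| < e).
Proof. by rewrite -ball_normE. Qed.

Lemma ballME (x y : M) e : ball x e y = (`|x - y| < e).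
Proof. by rewrite -ball_normE. Qed.

Lemma open_preimage_trace (K : set M) (f : M -> R) (V : set R) :
  contK K f -> open V -> exists W : set M, open W /\ K `&` f @^-1` V = K `&` W.
Proof.
move=> cf oV.
exists (\bigcup_(p in [set p : M * R | 0 < p.2 /\
   forall z, K z -> ball p.1 p.2 z -> V (f z)]) ball p.1 p.2).
split; first by apply: bigcup_open => p _; exact: ball_open.
apply/seteqP; split => z [Kz Hz]; split => //.
  move: oV; rewrite openE => /(_ _ Hz) /nbhs_ballP [e e0 eV].
  have [d d0 Hd] := cf z Kz e e0.
  exists (z, d) => /=; last exact: ballxx.
  split => // w Kw zw; apply: eV; rewrite ballRE; exact: Hd.
by case: Hz => -[x d] /= [d0 Hd] xz; exact: Hd.
Qed.

Lemma contK_measurable (K : set MT) (f : M -> R) :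
  measurable K -> contK K f -> measurable_fun K (f : MT -> R).
Proof.
move=> mK cf; apply: (measurability _ (measurable_realfun.RGenOpens.measurableE R)).
move=> _ [_ [a [b ->]] <-].
have [W [oW ->]] := @open_preimage_trace K f _ cf (@interval_open R (BRight a) (BLeft b) isT isT).
by apply: measurableI => //; exact: open_mT.
Qed.

Lemma lip1_contK (xi : M -> R) chi : lip1 xi chi -> contK (Kxi xi) chi.
Proof.
move=> [_ Lchi] x Kx e e0.
exists (e / (D%:R + 1)); first by rewrite divr_gt0 // ltr_wpDl.
move=> z Kz; rewrite ballME => xz.
apply: le_lt_trans (Lchi _ _ Kx Kz) _.
apply: le_lt_trans (frob_le_mxnorm _) _.
apply: (@le_lt_trans _ _ ((D%:R + 1) * `|x - z|)).
  by rewrite ler_wpM2r // lerDl.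
by rewrite mulrC -ltr_pdivlMr // ltr_wpDl.
Qed.


Lemma lip1_bound (xi : M -> R) : smooth xi ->
  exists C : R, 0 <= C /\
    forall chi, lip1 xi chi -> forall x, Kxi xi x -> `|chi x| <= C.
Proof.
move=> sxi; have [C [C0 HC]] := Kxi_bounded xi sxi.
exists (1 + C); split; first by rewrite addr_ge0.
move=> chi [c0 Lc] x Kx.
have -> : chi x = chi (x0 xi) + (chi x - chi (x0 xi)) by rewrite addrC subrK.
apply: le_trans (ler_normD _ _) _; apply: lerD => //.
apply: le_trans (Lc _ _ Kx (x0_in_K xi)) _; exact: HC.
Qed.

Lemma bounded_on (K : set M) (f : M -> R) C :
  (forall x, K x -> `|f x| <= C) -> [bounded f x | x in K].
Proof.
move=> Hf; rewrite /bounded_near; near=> N => x Kx /=.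
apply: le_trans (Hf _ Kx) _; near: N; apply: nbhs_pinfty_ge; exact: num_real.
Unshelve. all: by end_near. Qed.

Lemma lip1_measurable (xi : M -> R) chi : smooth xi -> lip1 xi chi ->
  measurable_fun (Kxi xi : set MT) (chi : MT -> R).
Proof.
move=> sxi lc; apply: contK_measurable; first exact: Kxi_measurable.
exact: lip1_contK.
Qed.

Lemma lip1_integrable (xi : M -> R) (mu : {finite_measure set MT -> \bar R}) chi :
  smooth xi -> lip1 xi chi ->
  mu.-integrable (Kxi xi : set MT) (fun x => (chi x)%:E).
Proof.
move=> sxi lc; have [C [C0 HC]] := lip1_bound xi sxi.
apply: (@measurable_bounded_integrable _ _ _ mu chi).
- exact: Kxi_measurable.
- by rewrite ltey_eq fin_num_measure //; exact: Kxi_measurable.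
- exact: lip1_measurable.
- by apply: (@bounded_on _ _ C) => x Kx; exact: HC.
Qed.

Lemma intKE (xi : M -> R) (mu : {finite_measure set MT -> \bar R}) chi :
  smooth xi -> lip1 xi chi ->
  ((intK xi mu chi)%:E = \int[mu]_(x in (Kxi xi : set MT)) (chi x)%:E)%E.
Proof.
move=> sxi lc; rewrite /intK fineK //.
apply: integrable_fin_num; first exact: Kxi_measurable.
exact: lip1_integrable.
Qed.

End B.

Section C.
Context {R : realType} {D : nat}.
Local Notation M := 'M[R]_(D, D).
Local Notation MT := (@MT R D).
Local Notation prob := (probability MT R).

Lemma Pup_Kc (xi : M -> R) (nu : prob) : smooth xi -> inPup xi nu ->
  nu (~` (Kxi xi : set MT)) = 0%E.
Proof.
move=> sxi [q [Hq [_ [_ Hlaw]]]].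
rewrite Hlaw; last by apply: measurableC; exact: Kxi_measurable.
rewrite (_ : _ `&` _ = set0) ?measure0 //.
apply/seteqP; split => // u [/= u01 Hu]; apply: Hu.
by exists (q u) => //; exact: Hq.
Qed.

Lemma Pup_K1 (xi : M -> R) (nu : prob) : smooth xi -> inPup xi nu ->
  nu (Kxi xi : set MT) = 1%E.
Proof.
move=> sxi Pnu; rewrite -(probability_setT nu) -(setUv (Kxi xi : set MT)).
rewrite measureU0 //; first exact: Kxi_measurable.
  by apply: measurableC; exact: Kxi_measurable.
exact: Pup_Kc.
Qed.

Lemma Pup_nonempty (xi : M -> R) : inPup xi (\d_(x0 xi : MT) : prob).
Proof.
exists (fun=> 0); split; first by move=> u _; split; [exact: psd0|rewrite frob0].
split; first by move=> u v _ _ _; rewrite /loewner_le subr0; exact: psd0.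
split; first by move=> u _; exact: cvg_cst.
move=> A mA; rewrite /= /dirac /=.
have [Ax|nAx] := pselect (A (x0 xi)).
  rewrite indicE mem_set //.
  rewrite (_ : _ `&` _ = `[0%R, 1%R[%classic); last first.
    by apply/seteqP; split => u /=; rewrite in_itv /=; [case|split].
  by rewrite lebesgue_measure_itv /= lte_fin ltr01 sube0.
rewrite indicE memNset // (_ : _ `&` _ = set0) ?measure0 //.
by apply/seteqP; split => // u [].
Qed.

Lemma dopen_measurable (xi : M -> R) (U : set (PT xi)) : dopen xi U -> measurable U.
Proof. by move=> oU; apply: sub_gen_smallest. Qed.

Lemma Pup_measurable (xi : M -> R) : measurable (Pup xi).
Proof. by apply: dopen_measurable => nu _ _; exists 1 => // nu' Pnu' _. Qed.

Lemma cont_measurable (xi : M -> R) (f : prob -> R) : cont_Pup xi f ->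
  measurable_fun [set: PT xi] (f : PT xi -> R).
Proof.
move=> cf; apply: (measurability _ (measurable_realfun.RGenOpens.measurableE R)).
move=> _ [_ [a [b ->]] <-]; rewrite setTI; apply: dopen_measurable.
move=> nu /= Hnu Pnu.
have oV := @interval_open R (BRight a) (BLeft b) isT isT.
move: oV; rewrite openE => /(_ _ Hnu) /nbhs_ballP [e e0 eV].
have [d d0 Hd] := cf nu Pnu e e0.
exists d => // nu' Pnu' dnu; apply: eV; rewrite ballRE; exact: Hd.
Qed.

Definition lscP (xi : M -> R) (F : prob -> \bar R) :=
  forall nu, inPup xi nu -> forall r : R, (r%:E < F nu)%E ->
    exists2 d : R, 0 < d & forall nu', inPup xi nu' ->
      (Defs.dist xi nu nu' < d%:E)%E -> (r%:E < F nu')%E.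

Lemma lsc_measurable (xi : M -> R) (F : prob -> \bar R) : lscP xi F ->
  measurable_fun [set: PT xi] (fun nu : PT xi => F nu).
Proof.
move=> cf; apply: (measurability _ (measurable_realfun.ErealGenOInfty.measurableE R)).
move=> _ [_ [r ->] <-]; rewrite setTI; apply: dopen_measurable.
move=> nu /=; rewrite in_itv /= andbT => Hnu Pnu.
have [d d0 Hd] := cf nu Pnu r Hnu.
by exists d => // nu' Pnu' dnu; rewrite /= in_itv /= andbT; exact: Hd.
Qed.

Lemma dist_ge (xi : M -> R) (nu nu' : prob) chi : lip1 xi chi ->
  ((intK xi nu chi - intK xi nu' chi)%:E <= Defs.dist xi nu nu')%E.
Proof. by move=> lc; apply: ereal_sup_ubound; exists chi. Qed.

End C.

Section Dsec.
Context {R : realType} {D : nat}.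
Local Notation M := 'M[R]_(D, D).
Local Notation MT := (@MT R D).
Local Notation prob := (probability MT R).

Definition gdist (U : set M) (x : M) : R := inf [set `|x - y| | y in ~` U].

Section gdist.
Variables (U : set M) (hU : ~` U !=set0).

Let lbE x : has_lbound [set `|x - y| | y in ~` U].
Proof. by exists 0 => _ [y _ <-]. Qed.

Let neE x : [set `|x - y| | y in ~` U] !=set0.
Proof. by case: hU => y Uy; exists `|x - y|, y. Qed.

Lemma gdist_ge0 x : 0 <= gdist U x.
Proof. by apply: lb_le_inf => // _ [y _ <-]. Qed.

Lemma gdist_le x y : ~ U y -> gdist U x <= `|x - y|.
Proof. by move=> Uy; apply: ge_inf => //; exists y. Qed.

Lemma gdist_lip x y : gdist U x <= gdist U y + `|x - y|.
Proof.
rewrite -lerBlDr; apply: lb_le_inf => // _ [w Uw <-].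
rewrite lerBlDr addrC; apply: le_trans (gdist_le _ _ Uw) _.
exact: ler_distD.
Qed.

Lemma gdist_lip' x y : `|gdist U x - gdist U y| <= `|x - y|.
Proof.
have h1 := gdist_lip x y; have h2 := gdist_lip y x; rewrite distrC in h2.
rewrite ler_norml; apply/andP; split; lra.
Qed.

Lemma gdist_pos x : open U -> U x -> 0 < gdist U x.
Proof.
move=> oU Ux; move: oU; rewrite openE => /(_ _ Ux) /nbhs_ballP [r r0 rU].
apply: (lt_le_trans r0); apply: lb_le_inf => // _ [w Uw <-].
rewrite leNgt; apply/negP => h; apply: Uw; apply: rU; rewrite ballME //.
Qed.

Lemma gdist_out x : ~ U x -> gdist U x = 0.
Proof.
by move=> Ux; apply/le_anti; rewrite gdist_ge0 andbT; apply: le_trans (gdist_le _ _ Ux) _; rewrite subrr normr0.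
Qed.

Definition chi (n : nat) (x : M) : R := Num.min 1 (n%:R * gdist U x).

Lemma chi_ge0 n x : 0 <= chi n x.
Proof. by rewrite /chi le_min ler01 mulr_ge0 // gdist_ge0. Qed.

Lemma chi_le1 n x : chi n x <= 1.
Proof. by rewrite /chi ge_min lexx. Qed.

Lemma chi_indic n x : chi n x <= \1_U x.
Proof.
rewrite indicE; have [Ux|Ux] := pselect (U x).
  by rewrite mem_set // chi_le1.
by rewrite memNset // /chi gdist_out // mulr0 ge_min lexx orbT.
Qed.

Lemma chi_nd x : {homo (fun n => chi n x) : n m / (n <= m)%N >-> n <= m}.
Proof.
move=> n m nm; rewrite /chi le_min ge_min lexx /= ge_min.
by rewrite ler_wpM2r ?gdist_ge0 ?ler_nat // orbT.
Qed.

Lemma chi_lim x : open U -> limn (fun n => (chi n x)%:E) = (\1_U x)%:E.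
Proof.
move=> oU; rewrite indicE; have [Ux|Ux] := pselect (U x); last first.
  rewrite memNset //; under eq_fun do rewrite /chi gdist_out // mulr0 (min_r ler01).
  exact: lim_cst.
rewrite mem_set //; apply: lim_near_cst => //.
have g0 := gdist_pos _ oU Ux.
exists (Num.Def.archi_bound (gdist U x)^-1) => // n /= Nn.
rewrite /chi; congr (_%:E); apply/min_l.
rewrite -ler_pdivrMr // div1r; apply/ltW.
apply: (lt_le_trans (archi_boundP _)); first by rewrite invr_ge0 ltW.
by rewrite ler_nat.
Qed.

Lemma min_lip (a b : R) : `|Num.min 1 a - Num.min 1 b| <= `|a - b|.
Proof.
have [ha|ha] := leP 1 a; have [hb|hb] := leP 1 b.
- by rewrite subrr normr0.
- have h1 : 0 <= 1 - b by lra.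
  have h2 : 0 <= a - b by lra.
  rewrite (ger0_norm h1) (ger0_norm h2); lra.
- have h1 : a - 1 <= 0 by lra.
  have h2 : a - b <= 0 by lra.
  rewrite (ler0_norm h1) (ler0_norm h2); lra.
- by [].
Qed.

Lemma chi_lip n x y : `|chi n x - chi n y| <= n%:R * `|x - y|.
Proof.
apply: le_trans (min_lip _ _) _; rewrite -mulrBr normrM ger0_norm //.
by rewrite ler_wpM2l // gdist_lip'.
Qed.

End gdist.

End Dsec.

Section Esec.
Context {R : realType} {D : nat}.
Local Notation M := 'M[R]_(D, D).
Local Notation MT := (@MT R D).
Local Notation prob := (probability MT R).

Lemma lipc_contK (K : set M) (f : M -> R) (c : R) : 0 <= c ->
  (forall x y, `|f x - f y| <= c * `|x - y|) -> contK K f.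
Proof.
move=> c0 Lf x _ e e0; exists (e / (c + 1)); first by rewrite divr_gt0 // ltr_wpDl.
move=> z _; rewrite ballME => xz; apply: le_lt_trans (Lf x z) _.
apply: (@le_lt_trans _ _ ((c + 1) * `|x - z|)).
  by rewrite ler_wpM2r // lerDl.
by rewrite mulrC -ltr_pdivlMr // ltr_wpDl.
Qed.

Lemma chi_lip1 (xi : M -> R) (U : set M) (hU : ~` U !=set0) n : (0 < n)%N ->
  lip1 xi (fun x => chi U n x / n%:R).
Proof.
move=> n0; have n0' : 0 < (n%:R : R) by rewrite ltr0n.
split.
  rewrite ger0_norm ?divr_ge0 ?chi_ge0 // ler_pdivrMr // mul1r.
  apply: le_trans (chi_le1 U n _) _; by rewrite ler1n.
move=> x y _ _; rewrite -mulrBl normrM [`|_^-1|]ger0_norm; last first.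
  by rewrite invr_ge0 ltW.
rewrite ler_pdivrMr // mulrC; apply: le_trans (chi_lip _ hU n x y) _.
by apply: ler_wpM2l; [exact: ltW | exact: mxnorm_le_frob].
Qed.

Lemma meas_open_lsc (xi : M -> R) (U : set M) : smooth xi -> open U -> ~` U !=set0 ->
  lscP xi (fun nu : prob => nu (U : set MT)).
Proof.
move=> sxi oU hU nu Pnu r rnu.
pose Kt : set MT := Kxi xi.
have mK : measurable Kt := Kxi_measurable xi sxi.
have mU : measurable (U : set MT) := open_mT _ oU.
have mchi n : measurable_fun Kt (chi U n : MT -> R).
  apply: contK_measurable => //; apply: (@lipc_contK _ _ n%:R) => //.
  exact: (chi_lip _ hU).
pose I (mu : prob) n := (\int[mu]_(x in Kt) (chi U n x)%:E)%E.
have Ind mu : {homo I mu : n m / (n <= m)%N >-> (n <= m)%E}.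
  move=> n m nm; apply: ge0_le_integral => //.
  - by move=> x _; rewrite lee_fin (chi_ge0 _ hU).
  - exact/measurable_EFinP.
  - exact/measurable_EFinP.
  - by move=> x _; rewrite lee_fin (chi_nd _ hU).
have IU mu n : (I mu n <= mu U)%E.
  apply: (@le_trans _ _ (\int[mu]_(x in Kt) (\1_U x)%:E)%E).
    apply: ge0_le_integral => //.
    - by move=> x _; rewrite lee_fin (chi_ge0 _ hU).
    - exact/measurable_EFinP.
    - by apply/measurable_EFinP; apply: measurable_indic.
    - by move=> x _; rewrite lee_fin (chi_indic _ hU).
  by rewrite integral_indic // measureIl.
have nuUK : nu (U `&` Kt) = nu U.
  rewrite -[in RHS](setIT (U : set MT)) -(setUv Kt) setIUr measureU0 //.
  - exact: measurableI.
  - by apply: measurableI => //; exact: measurableC.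
  apply: (subset_measure0 _ _ _ (Pup_Kc xi nu sxi Pnu)).
  + by apply: measurableI => //; exact: measurableC.
  + exact: measurableC.
  + exact: subIsetr.
have Icvg : I nu n @[n --> \oo] --> nu U.
  have := @cvg_monotone_convergence _ _ _ nu _ mK (fun n x => (chi U n x)%:E).
  rewrite -nuUK -integral_indic //.
  under [X in _ -> _ -> _ -> _ --> X]eq_integral do rewrite (chi_lim _ hU) //.
  apply.
  - by move=> n; exact/measurable_EFinP.
  - by move=> n x _; rewrite lee_fin (chi_ge0 _ hU).
  - by move=> x _ n m nm; rewrite lee_fin (chi_nd _ hU).
have [n0 Hn0] : exists n, (r%:E < I nu n)%E.
  have Hs := ereal_nondecreasing_cvgn (Ind nu).
  have eqs : nu U = ereal_sup (range (I nu)).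
    exact: (@cvg_unique _ (@ereal_hausdorff R) _ _ _ _ Icvg Hs).
  rewrite eqs in rnu; have [_ [n _ <-] rn] := ereal_sup_gt rnu.
  by exists n.
pose n := n0.+1.
have rn : (r%:E < I nu n)%E by apply: lt_le_trans Hn0 (Ind _ _ _ _).
have n0' : 0 < (n%:R : R) by rewrite ltr0n.
pose h := fun x => chi U n x / n%:R.
have lh : lip1 xi h by exact: chi_lip1.
have IE (mu : prob) : I mu n = (n%:R * intK xi mu h)%:E.
  rewrite EFinM intKE // -ge0_integralZl //.
  - apply: eq_integral => x _; rewrite -EFinM /h mulrC divfK //.
    by rewrite gt_eqF.
  - by apply/measurable_EFinP; exact: (lip1_measurable xi h sxi lh).
  - by move=> x _; rewrite lee_fin divr_ge0 ?(chi_ge0 _ hU) ?ltW.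
rewrite IE lte_fin in rn.
exists (intK xi nu h - r / n%:R).
  by rewrite subr_gt0 mulrC ltr_pdivrMl.
move=> nu' Pnu' dnu.
have := le_lt_trans (dist_ge xi nu nu' h lh) dnu; rewrite lte_fin => H.
apply: lt_le_trans (IU nu' n); rewrite IE lte_fin.
rewrite -ltr_pdivrMl // mulrC.
by move: H; rewrite ltrBlDr addrC -ltrBlDr opprB addrC subrK.
Qed.

End Esec.

Section Fsec.
Context {R : realType} {D : nat}.
Local Notation M := 'M[R]_(D, D).
Local Notation MT := (@MT R D).
Local Notation prob := (probability MT R).

Lemma meas_eval (xi : M -> R) : smooth xi -> forall A : set MT, measurable A ->
  measurable_fun [set: PT xi] (fun nu : PT xi => (nu : prob) A).
Proof.
move=> sxi A mA.
have PT1 : measurable_fun [set: PT xi] (fun nu : PT xi => (nu : prob) [set: MT]).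
  under eq_fun do rewrite probability_setT; exact: measurable_cst.
apply: (@dynkin_induction _ MT (open : set (set MT))
  (fun A => measurable_fun [set: PT xi] (fun nu : PT xi => (nu : prob) A))) => //.
- exact: openI.
- move=> U oU; have [hU|hU] := pselect (~` U !=set0).
    exact: (lsc_measurable xi _ (meas_open_lsc xi U sxi oU hU)).
  have -> : U = [set: MT].
    apply/seteqP; split => // x _; apply: contrapT => Ux; apply: hU; by exists x.
  exact: PT1.
- move=> S mS PS; under eq_fun do rewrite probability_setC //.
  by apply: emeasurable_funB => //; exact: measurable_cst.
- move=> F mF tF PF.
  have -> : (fun nu : PT xi => (nu : prob) (\bigcup_k F k)) =
      (fun nu : PT xi => \sum_(0 <= k <oo | k \in [set: nat]) (nu : prob) (F k))%E.
    by apply/funext => nu; rewrite measure_bigcup.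
  by apply: ge0_emeasurable_sum => // k x _ _; exact: measure_ge0.
Qed.

End Fsec.

Section Gsec.
Context {R : realType} {D : nat}.
Local Notation M := 'M[R]_(D, D).
Local Notation MT := (@MT R D).
Local Notation prob := (probability MT R).
Local Open Scope ereal_scope.

Variables (xi : M -> R) (sxi : smooth xi) (eta : probability (PT xi) R)
  (beta : prob) (HBar : is_Bar xi eta beta).

Let mP : measurable (Pup xi) := Pup_measurable xi.

Let mev U : measurable U -> measurable_fun (Pup xi) (fun nu : PT xi => (nu : prob) U).
Proof. by move=> mU; apply: measurable_funS (meas_eval xi sxi U mU). Qed.

Let fub_indic E : measurable E -> \int[beta]_x (\1_E x)%:E =
  \int[eta]_(nu in Pup xi) \int[(nu : prob)]_x (\1_E x)%:E.
Proof.
move=> mE; rewrite integral_indic // setIT; apply: (eq_trans (HBar E mE)).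
by apply: eq_integral => nu _; rewrite integral_indic // setIT.
Qed.

Import HBNNSimple.

Let fub_nnsfun (f : {nnsfun MT >-> R}) : \int[beta]_x (f x)%:E =
  \int[eta]_(nu in Pup xi) \int[(nu : prob)]_x (f x)%:E.
Proof.
under [in LHS]eq_integral do rewrite fimfunE -fsumEFin//.
rewrite ge0_integral_fsum//; last 2 first.
  - by move=> r; exact/measurable_EFinP/measurableT_comp.
  - by move=> r z _; rewrite EFinM nnfun_muleindic_ge0.
under [in RHS]eq_integral.
  move=> y _.
  under eq_integral.
    by move=> z _; rewrite fimfunE -fsumEFin//; over.
  rewrite /= ge0_integral_fsum//; last 2 first.
    - by move=> r; exact/measurable_EFinP/measurableT_comp.
    - by move=> r z _; rewrite EFinM nnfun_muleindic_ge0.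
  under eq_fsbigr.
    move=> r _.
    rewrite (integralZl_indic _ (fun r => f @^-1` [set r]))//; last first.
      by move=> r0; rewrite preimage_nnfun0.
    rewrite integral_indic// setIT.
    over.
  over.
rewrite /= ge0_integral_fsum//; last 2 first.
  - by move=> r; apply: measurable_funeM; exact: mev.
  - move=> n y _.
    have := mulemu_ge0 (fun n => f @^-1` [set n]).
    by apply; exact: preimage_nnfun0.
apply: eq_fsbigr => r _.
rewrite (integralZl_indic _ (fun r => f @^-1` [set r]))//; last first.
  exact: preimage_nnfun0.
rewrite /= fub_indic//.
have [r0|r0] := leP 0%R r.
  rewrite ge0_integralZl//.
    by congr (_ * _); apply: eq_integral => nu _; rewrite integral_indic // setIT.
  have hm : measurable (f @^-1` [set r] : set MT) by exact: measurable_funPTI.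
  exact (mev _ hm).
rewrite integral0_eq ?mule0.
  by rewrite integral0_eq// => y _; rewrite preimage_nnfun0// measure0 mule0.
by move=> y _; rewrite integral0_eq// => z _; rewrite preimage_nnfun0// indic0.
Qed.

Lemma fubini_bar (g : MT -> \bar R) : (forall x, 0 <= g x) -> measurable_fun [set: MT] g ->
  \int[beta]_x g x = \int[eta]_(nu in Pup xi) \int[(nu : prob)]_x g x.
Proof.
move=> f0 mf.
pose f_ := nnsfun_approx measurableT mf.
transitivity (\int[beta]_z (lim ((f_ n z)%:E @[n --> \oo]))).
  by apply/eq_integral => z _; apply/esym/cvg_lim => //=; exact: cvg_nnsfun_approx.
rewrite monotone_convergence//; last 3 first.
  by move=> n; exact/measurable_EFinP.
  by move=> n z _; rewrite lee_fin.
  by move=> z _ a b ab; rewrite lee_fin; exact/lefP/nd_nnsfun_approx.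
rewrite (_ : (fun _ => _) =
    (fun n => \int[eta]_(nu in Pup xi) (\int[(nu : prob)]_z (f_ n z)%:E)))//; last first.
  by apply/funext => n; rewrite fub_nnsfun.
transitivity (\int[eta]_(nu in Pup xi) lim ((\int[(nu : prob)]_z (f_ n z)%:E) @[n --> \oo])).
  rewrite -monotone_convergence//; last 3 first.
  - move=> n.
    have := @measurable_fun_integral_kernel _ _ (PT xi) MT R
      (fun nu : PT xi => ((nu : prob) : measure MT R))
      (fun U mU => meas_eval xi sxi U mU) (fun z => (f_ n z)%:E).
    move=> /(_ _ _) H; apply: measurable_funS (H _ _) => //.
    + by move=> z; rewrite lee_fin.
    + exact/measurable_EFinP.
  - by move=> n y _; apply: integral_ge0 => // z _; rewrite lee_fin.
  - move=> y _ a b ab; apply: ge0_le_integral => //.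
    + by move=> z _; rewrite lee_fin.
    + exact/measurable_EFinP.
    + exact/measurable_EFinP.
    + by move=> z _; rewrite lee_fin; exact/lefP/nd_nnsfun_approx.
apply: eq_integral => y _; rewrite -monotone_convergence//; last 3 first.
  - by move=> n; exact/measurable_EFinP.
  - by move=> n z _; rewrite lee_fin.
  - by move=> z _ a b ab; rewrite lee_fin; exact/lefP/nd_nnsfun_approx.
by apply: eq_integral => z _; apply/cvg_lim => //; exact: cvg_nnsfun_approx.
Qed.

End Gsec.

Lemma le_integral_gen {R : realType} d (T : measurableType d) (mu : measure T R)
    (Dm : set T) (f g : T -> \bar R) :
  measurable Dm -> measurable_fun Dm f -> mu.-integrable Dm g ->
  (forall x, Dm x -> (f x <= g x)%E) ->
  (\int[mu]_(x in Dm) f x <= \int[mu]_(x in Dm) g x)%E.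
Proof.
move=> mD mf ig fg; have [mg _] := integrableP _ _ _ ig.
have fg' : {in Dm, forall x, (f x <= g x)%E} by move=> x; rewrite inE; exact: fg.
rewrite [X in (X <= _)%E]integralE [X in (_ <= X)%E]integralE; apply: leeB.
  apply: ge0_le_integral => //.
  - exact: measurable_funepos.
  - exact: measurable_funepos.
  - by move=> x Dx; apply: (funepos_le fg'); rewrite inE.
apply: ge0_le_integral => //.
- exact: measurable_funeneg.
- exact: measurable_funeneg.
- by move=> x Dx; apply: (funeneg_le fg'); rewrite inE.
Qed.

Theorem proposition5p17 (R : realType) (D : nat) (xi : 'M[R]_(D, D) -> R)
    (phi : probability (@MT R D) R -> R) :
  (0 < D)%N ->
  smooth xi -> strictly_convex_on_psd xi ->
  cont_Pup xi phi ->
  forall chi0 : 'M[R]_(D, D) -> R, lip1 xi chi0 ->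
    barphi_star xi phi chi0 = phixi_star xi phi chi0.
Proof.
move=> _ sxi _ cphi chi0 lc0.
have mK : measurable (Kxi xi : set (@MT R D)) := Kxi_measurable xi sxi.
have [C [C0 HC]] := lip1_bound xi sxi.
have mPup := Pup_measurable xi.
have mphi : measurable_fun (Pup xi) (fun nu : PT xi => (phi nu)%:E).
  apply/measurable_EFinP; apply: measurable_funS (cont_measurable xi phi cphi) => //.
have lip0 : lip1 xi (fun _ => 0).
  split; first by rewrite normr0 ler01.
  by move=> x y _ _; rewrite subrr normr0; exact: frob_ge0.
apply/le_anti/andP; split.
-
  apply: le_ereal_inf_tmp => _ [nu Pnu <-].
  pose m := fun chi => intK xi nu chi.
  have m1 : inM1 xi m.
    move=> e e0; exists nu, mzero => chi _.
    by rewrite /intK integral_measure_zero /= subr0 /m subrr normr0 ltW.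
  apply: le_trans (ereal_inf_lbound _) _; first by exists m.
  rewrite EFinB; apply: leeB => //.
  apply: ereal_sup_ubound; exists (\d_(nu : PT xi)), nu; split.
  + by rewrite /borel_prob_Pup /= diracE mem_set.
  + move=> A mA; rewrite integral_dirac //; last first.
      by apply: measurable_funS (meas_eval xi sxi A mA).
    by rewrite /= diracE mem_set // mul1e.
  + rewrite integral_dirac // /= diracE mem_set // mul1e.
    have -> : dM xi nu m = 0%E.
      rewrite /dM (_ : [set _ | _ in _] = [set 0%E]) ?ereal_sup1 //.
      apply/seteqP; split => [_ [chi _ <-]|_ ->]; first by rewrite /m subrr.
      by exists (fun _ => 0) => //; rewrite /m subrr.
    by rewrite sube0.
-
  apply: le_ereal_inf_tmp => _ [m Hm <-].
  have nu0P := Pup_nonempty xi.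
  have HL : forall nu, inPup xi nu ->
      (phixi_star xi phi chi0 <= (intK xi nu chi0 - phi nu)%:E)%E.
    by move=> nu Pnu; apply: ereal_inf_lbound; exists nu.
  case HLe : (phixi_star xi phi chi0) HL => [l| |] HL; last first.
  + by rewrite leNye.
  + by have := HL _ nu0P; rewrite leye_eq.
  have Hphi : forall nu, inPup xi nu -> phi nu <= intK xi nu chi0 - l.
    by move=> nu Pnu; have := HL _ Pnu; rewrite lee_fin => ?; lra.
  suff Hb : (barphi xi phi m <= (m chi0 - l)%:E)%E.
    move: Hb; case: (barphi xi phi m) => [y| |] //=.
      by rewrite !lee_fin => ?; lra.
    by rewrite leey.
  apply: ge_ereal_sup => _ [eta [beta [Heta HBar ->]]].
  have HdM : ((intK xi beta chi0 - m chi0)%:E <= dM xi beta m)%E.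
    by apply: ereal_sup_ubound; exists chi0.
  suff Hint : (\int[eta]_(nu in Pup xi) (phi nu)%:E <= (intK xi beta chi0 - l)%:E)%E.
    by apply: le_trans (leeB Hint HdM) _; rewrite -EFinB lee_fin; lra.
  pose g : (@MT R D) -> \bar R :=
    (fun x => (chi0 x + C)%:E) \_ (Kxi xi : set (@MT R D)).
  have g0 : forall x, (0 <= g x)%E.
    move=> x; rewrite /g /patch; case: ifPn => [/set_mem Kx|_] //.
    rewrite lee_fin; have := HC _ lc0 x Kx; rewrite ler_norml => /andP[h _].
    lra.
  have mg : measurable_fun [set: @MT R D] g.
    apply: (measurable_restrictT _ mK).1.
    apply/measurable_EFinP; apply: measurable_funD.
      exact: lip1_measurable.
    exact: measurable_cst.
  have intg (mu : probability (@MT R D) R) :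
      mu (Kxi xi : set (@MT R D)) = 1%E ->
      (\int[mu]_x g x = (intK xi mu chi0 + C)%:E)%E.
    move=> mu1; rewrite /g -integral_mkcond.
    rewrite (_ : (fun x => (chi0 x + C)%:E) =
      (fun x => (EFin \o chi0) x + (EFin \o cst C) x)%E); last by apply/funext.
    rewrite integralD_EFin //; last 2 first.
    - exact: lip1_integrable.
    - exact: finite_measure_integrable_cst.
    rewrite -intKE //=.
    have hc : (\int[mu]_(_ in (Kxi xi : set (@MT R D))) C%:E)%E =
        (C%:E * mu (Kxi xi : set (@MT R D)))%E by exact: integral_cst.
    by rewrite hc mu1 mule1 -EFinD.
  have betaK : beta (Kxi xi : set (@MT R D)) = 1%E.
    apply: (eq_trans (HBar _ mK)).
    rewrite (eq_integral (fun _ => 1%E)); last first.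
      by move=> nu; rewrite inE => Pnu; exact: Pup_K1.
    by rewrite integral_cst // mul1e.
  have HF := fubini_bar xi sxi eta beta HBar g g0 mg.
  rewrite intg // in HF.
  pose G := fun nu : PT xi => (\int[(nu : probability (@MT R D) R)]_x g x)%E.
  have GE : forall nu, Pup xi nu -> G nu = (intK xi nu chi0 + C)%:E.
    by move=> nu Pnu; apply: intg; exact: Pup_K1.
  have mG : measurable_fun (Pup xi) G.
    have := @measurable_fun_integral_kernel _ _ (PT xi) (@MT R D) R
      (fun nu : PT xi => ((nu : probability (@MT R D) R) : measure (@MT R D) R))
      (fun U mU => meas_eval xi sxi U mU) g g0 mg.
    by apply: measurable_funS.
  have iG : eta.-integrable (Pup xi) G.
    apply/integrableP; split => //.
    rewrite (eq_integral G); last first.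
      by move=> nu _; rewrite gee0_abs // integral_ge0.
    by rewrite -HF ltry.
  have ic : eta.-integrable (Pup xi) (fun _ => (C + l)%:E).
    exact: finite_measure_integrable_cst.
  apply: (@le_trans _ _ (\int[eta]_(nu in Pup xi) (G nu - (C + l)%:E))%E).
    apply: le_integral_gen => //.
    - exact: integrableB.
    - move=> nu Pnu; rewrite GE // -EFinB lee_fin.
      have := Hphi nu Pnu; lra.
  rewrite integralB // -HF.
  have hc : (\int[eta]_(_ in Pup xi) (C + l)%:E)%E =
      ((C + l)%:E * eta (Pup xi))%E by exact: integral_cst.
  rewrite hc.
  have -> : eta (Pup xi) = 1%E by exact: Heta.
  by rewrite mule1 -EFinB lee_fin; lra.
Qed.
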